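(* (a) If for some $i_0 \in \{1, \ldots, n\}$ one has $a_{i_0} \ge c_R$, then Herzog–Kunz generators $x_1, \ldots, x_n$ of $R$ can be chosen with $x_i = t^{a_i}$ for all $i \ge i_0$. (b) If moreover $k$ is algebraically closed of characteristic $0$, then the uniformizing parameter $t$ of $\overline R = k[[t]]$ can be chosen such that, in addition, $x_1 = t^{a_1}$ (and the valuation $v$, the integers $a_i$ and $c_R$ are unchanged by this choice).
   Context: Let $k$ be a field and let $(R,\mathfrak m)$ be a complete local noetherian domain of dimension $1$ containing $k$ with $R/\mathfrak m = k$, with normalization $\overline R$ having residue field $k$, so $\overline R = k[[t]]$ for a uniformizing parameter $t$ and $R \subseteq k[[t]]$ is finite birational with $Q(R) = k((t))$. Let $v$ be the $t$-adic valuation. For $A \subseteq k((t))$ let $v(A) = \{v(f): f\in A\setminus\{0\}\}$. The conductor is $\mathfrak C_R = \{x \in \overline R : x\overline R \subseteq R\}$; one has $\mathfrak C_R = t^{c_R}\overline R$, and $c_R$ is the conductor degree. The Herzog–Kunz sequence of $R$ is the set $v(\mathfrak m)\setminus v(\mathfrak m^2)$ listed increasingly as $a_1 < \cdots < a_n$ (then $n = \mathrm{edim}(R)$); Herzog–Kunz generators are elements $x_1,\ldots,x_n \in R$ with $v(x_i) = a_i$, and any such satisfy $R = k[[x_1,\ldots,x_n]]$ (the image of $k[[X_1,\dots,X_n]]\to k[[t]]$, $X_i\mapsto x_i$). *)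

(* Defs.v *)
(* Formal power series k[[t]] over a field k are modelled as
   coefficient sequences  nat -> k  (f = \sum_n f n t^n). *)
From mathcomp Require Import all_boot all_algebra.
Set Implicit Arguments. Unset Strict Implicit. Unset Printing Implicit Defensive.
Import GRing.Theory.
Local Open Scope ring_scope.

Section PS.
Variable k : fieldType.

Definition series := nat -> k.

Definition ps_zero : series := fun _ => 0.
Definition ps_const (c : k) : series := fun n => if n == 0%N then c else 0.
Definition ps_one : series := ps_const 1.
Definition ps_X : series := fun n => if n == 1%N then 1 else 0.
Definition ps_add (f g : series) : series := fun n => f n + g n.
Definition ps_mul (f g : series) : series :=
  fun n => \sum_(j < n.+1) f j * g (n - j)%N.
Definition ps_exp (f : series) (m : nat) : series := iter m (ps_mul f) ps_one.

Definition ps_ord (f : series) (n : nat) : Prop :=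
  f n != 0 /\ forall m, (m < n)%N -> f m = 0.

Definition val_set (A : series -> Prop) (j : nat) : Prop :=
  exists f, A f /\ ps_ord f j.

(* R is a k-subalgebra of k[[t]] with nonzero conductor, i.e. a complete local
   one-dimensional domain containing k, residue field k, with k[[t]] as
   finite birational normalization. *)
Record good_subring (R : series -> Prop) : Prop := {
  gs_const : forall c, R (ps_const c);
  gs_add : forall f g, R f -> R g -> R (ps_add f g);
  gs_mul : forall f g, R f -> R g -> R (ps_mul f g);
  gs_cond : exists c, forall f : series, (forall m, (m < c)%N -> f m = 0) -> R f
}.

(* maximal ideal of the local ring R = its non-units *)
Definition maxideal (R : series -> Prop) (f : series) : Prop :=
  R f /\ ~ (exists g, R g /\ ps_mul f g =1 ps_one).

Definition ideal_sq (I : series -> Prop) (f : series) : Prop :=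
  exists (N : nat) (a b : 'I_N -> series),
    (forall j, I (a j) /\ I (b j)) /\
    f =1 (fun n => \sum_(j < N) ps_mul (a j) (b j) n).

Definition conductor (R : series -> Prop) (x : series) : Prop :=
  forall y, R (ps_mul x y).

Definition conductor_degree (R : series -> Prop) (c : nat) : Prop :=
  (exists x, conductor R x /\ ps_ord x c) /\
  (forall x j, conductor R x -> ps_ord x j -> (c <= j)%N).

Definition HK_sequence (R : series -> Prop) (a : seq nat) : Prop :=
  sorted ltn a /\
  forall j, (j \in a) <->
    (val_set (maxideal R) j /\ ~ val_set (ideal_sq (maxideal R)) j).

End PS.

(* Main.v *)
Require Import Defs.
From mathcomp Require Import all_boot all_algebra.
From mathcomp Require Import zify ring.
From Stdlib Require Import IndefiniteDescription FunctionalExtensionality.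
Set Implicit Arguments. Unset Strict Implicit. Unset Printing Implicit Defensive.
Import GRing.Theory.
Local Open Scope ring_scope.

Section H.
Variable k : fieldType.
Implicit Types (f g h l u V tau w x y : series k).

Definition agree f g n := forall j, (j < n)%N -> f j = g j.
Definition trunc f n : {poly k} := \poly_(j < n.+1) f j.
Lemma trunc_coef f n j : (j <= n)%N -> (trunc f n)`_j = f j.
Proof. by move=> H; rewrite coef_poly ltnS H. Qed.

Lemma mulE f g (p q : {poly k}) n : (forall j, (j <= n)%N -> p`_j = f j) ->
  (forall j, (j <= n)%N -> q`_j = g j) -> ps_mul f g n = (p * q)`_n.
Proof.
move=> Hp Hq; rewrite coefM /ps_mul; apply: eq_bigr => j _.
have Hj := ltn_ord j.
by rewrite Hp ?Hq //; lia.
Qed.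

Lemma expE f (p : {poly k}) a n : (forall j, (j <= n)%N -> p`_j = f j) ->
  ps_exp f a n = (p ^+ a)`_n.
Proof.
elim: a n => [|a IH] n Hp.
  by rewrite expr0 coef1 /= /ps_one /ps_const; case: (n == 0%N).
rewrite exprS; change (ps_mul f (ps_exp f a) n = (p * p ^+ a)`_n).
apply: mulE => // j Hj; symmetry; apply: IH => i Hi; apply: Hp; exact: leq_trans Hi Hj.
Qed.

Lemma mul_agree f g h l n : agree f g n -> agree h l n -> agree (ps_mul f h) (ps_mul g l) n.
Proof.
move=> Hf Hh j Hj; apply: eq_bigr => i _.
have Hi := ltn_ord i.
by rewrite Hf ?Hh //; lia.
Qed.

Lemma exp_agree f g n a : agree f g n -> agree (ps_exp f a) (ps_exp g a) n.
Proof.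
move=> H; elim: a => [|a IH] //=.
exact: mul_agree.
Qed.

Lemma mul0 f g : ps_mul f g 0 = f 0%N * g 0%N.
Proof. by rewrite /ps_mul big_ord1. Qed.

Lemma exp0 f a : ps_exp f a 0 = f 0%N ^+ a.
Proof.
elim: a => [|a IH]; first by rewrite /= /ps_one /ps_const eqxx.
by rewrite exprS -IH; exact: mul0.
Qed.

Lemma mul_diff f g h l n : (0 < n)%N -> agree f g n -> agree h l n ->
  ps_mul f h n - ps_mul g l n = f 0%N * (h n - l n) + (f n - g n) * h 0%N.
Proof.
case: n => [//|m] _ Hf Hh.
rewrite /ps_mul -sumrB big_ord_recl big_ord_recr /=.
rewrite big1 ?add0r; last first.
  move=> i _; rewrite /bump /=.
  have Hi := ltn_ord i.
  by rewrite Hf ?Hh ?subrr //; lia.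
rewrite /bump /= subn0 subnn -(Hf 0%N) // -(Hh 0%N) //.
ring.
Qed.

Lemma exp_diff V V' n a : (0 < n)%N -> agree V V' n ->
  ps_exp V a n - ps_exp V' a n = a%:R * V 0%N ^+ a.-1 * (V n - V' n).
Proof.
move=> Hn H; elim: a => [|a IH]; first by rewrite /= subrr mul0r mul0r.
change (ps_mul V (ps_exp V a) n - ps_mul V' (ps_exp V' a) n =
  a.+1%:R * V 0%N ^+ a * (V n - V' n)).
rewrite mul_diff //; last exact: exp_agree.
rewrite IH exp0.
case: a {IH} => [|b] /=; first by rewrite !expr0; ring.
rewrite -[b.+2%:R]natr1 -[b.+1%:R]natr1 !exprS; ring.
Qed.

Lemma build (F : series k -> series k) (lam : k) (tg : series k) (r : k) :
  lam != 0 ->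
  (forall V V' n, agree V V' n -> agree (F V) (F V') n) ->
  (forall V V' n, (0 < n)%N -> V 0%N = r -> agree V V' n ->
      F V n - F V' n = lam * (V n - V' n)) ->
  F (ps_const r) 0%N = tg 0%N ->
  exists V, forall n, F V n = tg n.
Proof.
move=> Hlam H1 H2 H0.
pose W := fix W n := if n is m.+1 then
   (fun j => if j == m.+1 then W m j + (tg j - F (W m) j) / lam else W m j)
   else ps_const r.
have WS m j : W m.+1 j = if j == m.+1 then W m j + (tg j - F (W m) j) / lam
                         else W m j by [].
have Wst n p j : (j <= n)%N -> W (n + p)%N j = W n j.
  move=> Hj; elim: p => [|p IH]; first by rewrite addn0.
  rewrite addnS WS IH; case: eqP => // E; lia.
have W0 n : W n 0%N = r.
  by rewrite -(add0n n) Wst.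
have Wag n : agree (W n.+1) (W n) n.+1.
  move=> j Hj; rewrite WS; case: eqP => // E; lia.
have WF n j : (j <= n)%N -> F (W n) j = tg j.
  elim: n j => [|n IH] j Hj.
    by have -> : j = 0%N by lia.
  case: (ltnP j n.+1) => Hj'.
    rewrite (H1 _ _ _ (Wag n)) //; exact: IH.
  have -> : j = n.+1 by lia.
  have := H2 _ _ n.+1 isT (W0 _) (Wag n).
  rewrite WS eqxx addrAC subrr add0r mulrC divfK // => E.
  by move: E => /(congr1 (fun z => z + F (W n) n.+1)); rewrite !subrK.
exists (fun j => W j j) => n.
have Ag : agree (fun j => W j j) (W n) n.+1.
  by move=> j Hj; rewrite -(subnK (ltnSE Hj)) addnC Wst.
rewrite (H1 _ _ _ Ag) //; exact: WF.
Qed.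


Lemma exp_shift tau w a n : (forall j, tau j = if j is j'.+1 then w j' else 0) ->
  ps_exp tau a n = if (n < a)%N then 0 else ps_exp w a (n - a)%N.
Proof.
move=> Ht; rewrite (@expE _ ('X * trunc w n)); last first.
  move=> j Hj; rewrite coefXM Ht; case: j Hj => //= j Hj.
  rewrite trunc_coef //; lia.
rewrite exprMn coefXnM; case: ifP => // _.
symmetry; apply: expE => j Hj; rewrite trunc_coef //; lia.
Qed.

Lemma mul_shiftc x u y c n : (forall j, x j = if (j < c)%N then 0 else u (j - c)%N) ->
  ps_mul x y n = if (n < c)%N then 0 else ps_mul u y (n - c)%N.
Proof.
move=> Hx; rewrite (@mulE _ _ ('X^c * trunc u n) (trunc y n)); last 2 first.
- move=> j Hj; rewrite coefXnM Hx; case: ifP => // _; rewrite trunc_coef //; lia.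
- by move=> j Hj; rewrite trunc_coef.
rewrite -mulrA coefXnM; case: ifP => // _.
symmetry; apply: mulE => j Hj; rewrite trunc_coef //; lia.
Qed.

Lemma exp_ord tau m : ps_ord tau 1 -> ps_ord (ps_exp tau m) m.
Proof.
move=> [H1 H0].
have Ht : forall j, tau j = if j is j'.+1 then tau j'.+1 else 0.
  by case=> [|j] //; rewrite H0.
split.
  rewrite (exp_shift _ _ Ht) ltnn subnn exp0; exact: expf_neq0.
by move=> j Hj; rewrite (exp_shift _ _ Ht) Hj.
Qed.

Lemma shift_solve x g c : ps_ord x c -> (forall j, (j < c)%N -> g j = 0) ->
  exists y, forall n, ps_mul x y n = g n.
Proof.
move=> [Hc Hlt] Hg.
pose u j := x (j + c)%N.
have [v Hv] : exists v, forall n, ps_mul u v n = g (n + c)%N.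
  apply: (@build (ps_mul u) (u 0%N) (fun n => g (n + c)%N) (g c / u 0%N)).
  - by rewrite /u add0n.
  - by move=> V V' n H; apply: mul_agree.
  - move=> V V' n Hn _ H; rewrite mul_diff // subrr mul0r addr0 //.
  - rewrite mul0 /ps_const eqxx mulrC divfK ?add0n //; by rewrite /u add0n.
exists v => n; rewrite (@mul_shiftc _ u _ c).
  case: ltnP => H; first by rewrite Hg.
  by rewrite Hv subnK.
move=> j; case: ltnP => H; first by rewrite Hlt.
by rewrite /u subnK.
Qed.

Lemma root_exists u a : GRing.closed_field_axiom k -> [pchar k] =i pred0 ->
  u 0%N != 0 -> (0 < a)%N -> exists w, forall n, ps_exp w a n = u n.
Proof.
move=> Hcl Hch Hu Ha.
have [r Hr] := Hcl a (fun i => if i == 0%N then u 0%N else 0) Ha.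
have Hr' : r ^+ a = u 0%N.
  rewrite Hr; case: a Ha {Hr} => // b _.
  rewrite big_ord_recl /= expr0 mulr1 big1 ?addr0 // => i _; by rewrite mul0r.
have r0 : r != 0.
  apply/eqP => E; move: Hu; rewrite -Hr' E expr0n; case: a Ha {Hr Hr'} => // b _ /=; by rewrite eqxx.
apply: (@build (fun V => ps_exp V a) (a%:R * r ^+ a.-1) u r).
- apply: mulf_neq0; last exact: expf_neq0.
  by have := (pcharf0P k).1 Hch a; move=> ->; rewrite -lt0n.
- by move=> V V' n H; apply: exp_agree.
- by move=> V V' n Hn H0 H; rewrite exp_diff // H0.
- by rewrite exp0 /ps_const eqxx.
Qed.

Lemma tau_exists x a : GRing.closed_field_axiom k -> [pchar k] =i pred0 ->
  ps_ord x a -> (0 < a)%N -> exists tau, ps_ord tau 1 /\ forall n, ps_exp tau a n = x n.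
Proof.
move=> Hcl Hch [Hxa Hx] Ha.
have Hxa' : (fun j => x (j + a)%N) 0%N != 0 by rewrite add0n.
have [w Hw] := @root_exists (fun j => x (j + a)%N) a Hcl Hch Hxa' Ha.
pose tau j := if j is j'.+1 then w j' else 0.
have Ht : forall j, tau j = if j is j'.+1 then w j' else 0 by [].
exists tau; split.
  split; last by case.
  rewrite /tau; apply/eqP => E; move: Hxa; have := Hw 0%N.
  by rewrite exp0 add0n E expr0n gtn_eqF // => <-; rewrite eqxx.
move=> n; rewrite (exp_shift _ _ Ht); case: ltnP => H; first by rewrite Hx.
by rewrite Hw subnK.
Qed.

End H.

(* Indices are 0-based: a_{i+1} = nth 0 a i, x_{i+1} = x i, n = size a. *)
Theorem mainTheorem3 (k : fieldType) (R : series k -> Prop) (a : seq nat)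
    (c : nat) (i0 : nat) :
  good_subring R -> conductor_degree R c -> HK_sequence R a ->
  (i0 < size a)%N -> (c <= nth 0%N a i0)%N ->
  (* (a) *)
  (exists x : nat -> series k,
      (forall i, (i < size a)%N -> R (x i) /\ ps_ord (x i) (nth 0%N a i)) /\
      (forall i, (i0 <= i < size a)%N -> x i =1 ps_exp (ps_X k) (nth 0%N a i)))
  /\
  (* (b) *)
  (GRing.closed_field_axiom k -> [pchar k] =i pred0 ->
   exists (tau : series k) (x : nat -> series k),
      ps_ord tau 1 /\
      (forall i, (i < size a)%N -> R (x i) /\ ps_ord (x i) (nth 0%N a i)) /\
      (forall i, (i0 <= i < size a)%N -> x i =1 ps_exp tau (nth 0%N a i)) /\
      x 0%N =1 ps_exp tau (nth 0%N a 0)).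
Proof.
move=> Hgs [[xc [Hxc Hxco]] _] [Hsort Ha] Hi0 Hc.
have HKx : forall i, (i < size a)%N -> exists f, R f /\ ps_ord f (nth 0%N a i).
  move=> i Hi; have [[f [[Rf _] Hf]] _] := (Ha _).1 (mem_nth 0%N Hi).
  by exists f.
have Hge : forall i, (i0 <= i < size a)%N -> (c <= nth 0%N a i)%N.
  move=> i /andP [H1 H2]; case: (ltngtP i0 i) H1 => // H _.
    apply: leq_trans Hc (ltnW _).
    by apply: (sorted_ltn_nth ltn_trans 0%N Hsort) => //; rewrite inE //; lia.
  by rewrite -H.
have Hcond : forall g m, (c <= m)%N -> ps_ord g m -> R g.
  move=> g m Hm [_ Hg].
  have [y Hy] := @shift_solve k xc g c Hxco (fun j Hj => Hg j (leq_trans Hj Hm)).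
  have -> : g = ps_mul xc y by apply: functional_extensionality => n; rewrite Hy.
  exact: Hxc.
have HXo : ps_ord (ps_X k) 1 by split; [rewrite /ps_X eqxx oner_neq0 | case].
split.
  have : forall i, exists f, ((i < size a)%N -> R f /\ ps_ord f (nth 0%N a i)) /\
     ((i0 <= i < size a)%N -> f =1 ps_exp (ps_X k) (nth 0%N a i)).
    move=> i; case: (boolP (i0 <= i < size a)%N) => Hi.
      exists (ps_exp (ps_X k) (nth 0%N a i)); split => // _.
      have Ho := exp_ord (nth 0%N a i) HXo.
      by split => //; apply: (Hcond _ _ (Hge _ Hi) Ho).
    case: (ltnP i (size a)) => Hs.
      have [f Hf] := HKx i Hs; exists f; split => // H; by rewrite H in Hi.
    exists (ps_X k); split => H; lia.
  move/functional_choice => [x Hx]; exists x; split => i Hi; by apply (Hx i).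
move=> Hcl Hch.
have Hs0 : (0 < size a)%N by lia.
have [tau [Htau HR0]] : exists tau, ps_ord tau 1 /\ R (ps_exp tau (nth 0%N a 0)).
  case: (posnP (nth 0%N a 0)) => H0.
    by exists (ps_X k); split => //; rewrite H0; apply: (gs_const Hgs).
  have [x0 [Rx0 Hx0]] := HKx 0%N Hs0.
  have [tau [Ht Hte]] := tau_exists Hcl Hch Hx0 H0.
  exists tau; split => //.
  have -> : ps_exp tau (nth 0%N a 0) = x0 by apply: functional_extensionality.
  exact: Rx0.
have : forall i, exists f, ((i < size a)%N -> R f /\ ps_ord f (nth 0%N a i)) /\
   ((i0 <= i < size a)%N -> f =1 ps_exp tau (nth 0%N a i)) /\
   (i = 0%N -> f =1 ps_exp tau (nth 0%N a 0)).
  move=> i; case: (boolP ((i == 0%N) || (i0 <= i < size a)%N)) => Hi.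
    exists (ps_exp tau (nth 0%N a i)).
    split; last by split => // E; rewrite E.
    move=> Hs; split; last exact: exp_ord.
    case/orP: Hi => [/eqP -> // | Hi].
    exact: (Hcond _ _ (Hge _ Hi) (exp_ord _ Htau)).
  move: Hi; rewrite negb_or => /andP [Hi1 Hi2].
  case: (ltnP i (size a)) => Hs.
    have [f Hf] := HKx i Hs; exists f; split => // ; split => H.
      by exfalso; lia.
    by exfalso; lia.
  exists (ps_X k); split; first by move=> H; lia.
  by split => H'; exfalso; lia.
move/functional_choice => [x Hx]; exists tau, x; split => //.
split; first by move=> i Hi; apply (Hx i).
split; first by move=> i Hi; apply (Hx i).
exact: (Hx 0%N).2.2.
Qed.
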